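(* Let $n\ge1$, $N\ge3$, $m=n+N$, let $u>0$ solve $\partial_tu=\Delta_xu$ on $\mathbb{R}^n\times(0,\infty)$ with $u=t^{-n/2}e^{-f}$, fix $0<\tau_1<\tau_2$, and assume $f$ and all of its partial derivatives in $x$ and $t$ are bounded on $\mathbb{R}^n\times[\tau_1,\tau_2]$. With $v,b,\psi$ as in the context, there is a constant $C$ depending only on $n$, $f$ and $\tau_2$ such that at every $(x,y)$ with $\frac{|y|^2}{2N}\in[\tau_1,\tau_2]$, \[ |\psi|,\ |\nabla_x\psi|,\ |\nabla_y b|\le C\qquad\text{and}\qquad |\nabla_y\psi|,\ |\nabla_x b|\le C\,N^{-1/2}. \]
   Context: $\mathbb{R}^m=\mathbb{R}^n\times\mathbb{R}^N$, points $(x,y)$, $r=|y|$; $\nabla_x,\nabla_y$ are the gradients in the $x$ and $y$ variables and $\Delta$ is the Euclidean Laplacian on $\mathbb{R}^m$. $v(x,y)=r^{2-m}\exp(-f(x,\tfrac{r^2}{2N}))$, $b=v^{1/(2-m)}$, $\psi=b^m\Delta v$. *)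

(* Defs.v *)
From HB Require Import structures.
From mathcomp Require Import all_boot all_order all_algebra.
From mathcomp Require Import all_classical all_reals all_analysis.
Set Implicit Arguments. Unset Strict Implicit. Unset Printing Implicit Defensive.
Import Order.TTheory GRing.Theory Num.Theory.
Import numFieldNormedType.Exports.
Local Open Scope ring_scope.

Section Defs.
Variable R : realType.

(* Euclidean norm on R^k (the library norm on matrices is the sup norm). *)
Definition enorm (k : nat) (y : 'rV[R]_k) : R :=
  Num.sqrt (\sum_(j < k) y ord0 j ^+ 2).

Definition pdx (n : nat) (F : 'rV[R]_n -> R -> R) (i : 'I_n) : 'rV[R]_n -> R -> R :=
  fun x t => derive (fun x' => F x' t) x (delta_mx ord0 i).
Definition pdt (n : nat) (F : 'rV[R]_n -> R -> R) : 'rV[R]_n -> R -> R :=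
  fun x t => derive (fun s => F x s) t 1.

Definition pdir (n : nat) (d : option 'I_n) (F : 'rV[R]_n -> R -> R) :=
  match d with Some i => pdx F i | None => pdt F end.

Definition derivable_dir (n : nat) (d : option 'I_n) (F : 'rV[R]_n -> R -> R)
    (x : 'rV[R]_n) (t : R) : Prop :=
  match d with
  | Some i => derivable (fun x' => F x' t) x (delta_mx ord0 i)
  | None => derivable (fun s => F x s) t 1
  end.

(* iterated partial derivatives (applied right to left) *)
Fixpoint pdn (n : nat) (ds : seq (option 'I_n)) (F : 'rV[R]_n -> R -> R) :=
  match ds with [::] => F | d :: ds' => pdir d (pdn ds' F) end.

Definition smooth_pos (n : nat) (f : 'rV[R]_n -> R -> R) : Prop :=
  forall (ds : seq (option 'I_n)) (x : 'rV[R]_n) (t : R), 0 < t ->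
    (forall d, derivable_dir d (pdn ds f) x t) /\
    {for (x, t), continuous (fun p : 'rV[R]_n * R => pdn ds f p.1 p.2)}.

Definition ufun (n : nat) (f : 'rV[R]_n -> R -> R) : 'rV[R]_n -> R -> R :=
  fun x t => t `^ (- (n%:R / 2)) * expR (- f x t).

Definition heat_eq (n : nat) (f : 'rV[R]_n -> R -> R) : Prop :=
  forall x t, 0 < t ->
    pdt (ufun f) x t = \sum_(i < n) pdx (pdx (ufun f) i) i x t.

Definition bounded_derivs (n : nat) (f : 'rV[R]_n -> R -> R) (tau1 tau2 : R) : Prop :=
  forall ds : seq (option 'I_n), exists K : R,
    forall x t, tau1 <= t <= tau2 -> `|pdn ds f x t| <= K.

Definition dX (n N : nat) (G : 'rV[R]_n -> 'rV[R]_N -> R) (i : 'I_n) :=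
  fun x y => derive (fun x' => G x' y) x (delta_mx ord0 i).
Definition dY (n N : nat) (G : 'rV[R]_n -> 'rV[R]_N -> R) (j : 'I_N) :=
  fun x y => derive (fun y' => G x y') y (delta_mx ord0 j).

Definition lap (n N : nat) (G : 'rV[R]_n -> 'rV[R]_N -> R) :=
  fun x y => \sum_(i < n) dX (dX G i) i x y + \sum_(j < N) dY (dY G j) j x y.

Definition gradX_norm (n N : nat) (G : 'rV[R]_n -> 'rV[R]_N -> R) x y : R :=
  Num.sqrt (\sum_(i < n) dX G i x y ^+ 2).
Definition gradY_norm (n N : nat) (G : 'rV[R]_n -> 'rV[R]_N -> R) x y : R :=
  Num.sqrt (\sum_(j < N) dY G j x y ^+ 2).

Definition vfun (n N : nat) (f : 'rV[R]_n -> R -> R) (x : 'rV[R]_n) (y : 'rV[R]_N) : R :=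
  (enorm y) ^- (n + N - 2)%N * expR (- f x (enorm y ^+ 2 / (2 * N%:R))).

Definition bfun (n N : nat) (f : 'rV[R]_n -> R -> R) (x : 'rV[R]_n) (y : 'rV[R]_N) : R :=
  @vfun n N f x y `^ ((2 - (n + N)%:R)^-1).

Definition psifun (n N : nat) (f : 'rV[R]_n -> R -> R) (x : 'rV[R]_n) (y : 'rV[R]_N) : R :=
  @bfun n N f x y ^+ (n + N) * lap (@vfun n N f) x y.

End Defs.

(* Main.v *)
Require Import Defs.
From HB Require Import structures.
From mathcomp Require Import all_boot all_order all_algebra.
From mathcomp Require Import all_classical all_reals all_analysis.
From mathcomp Require Import ring lra.
Set Implicit Arguments. Unset Strict Implicit. Unset Printing Implicit Defensive.
Import Order.TTheory GRing.Theory Num.Theory.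
Import numFieldNormedType.Exports.
Local Open Scope ring_scope.
Local Open Scope classical_set_scope.
Local Open Scope ring_scope.

Section Tool.
Variables (R : realType) (V : normedModType R).
Implicit Types (F G : V -> R) (x v : V).

Lemma deriveLine F x v : derive F x v = derive (fun h : R => F (h *: v + x)) 0 1.
Proof.
rewrite /derive; set g1 := fun h => h^-1 *: _; set g2 := fun h => h^-1 *: _.
suff -> : g1 = g2 by [].
by rewrite funeqE /g1 /g2 => h /=; rewrite addr0 scale0r add0r [_%:A]mulr1.
Qed.

Lemma isd_line F x v (d : R) : is_derive (0:R) (1:R) (fun h : R => F (h *: v + x)) (d:R) -> is_derive x v F d.
Proof. by case=> H1 H2; split; [apply/derivable1P | rewrite deriveLine]. Qed.

Lemma line_isd F x v (d : R) : is_derive x v F d -> is_derive (0:R) (1:R) (fun h : R => F (h *: v + x)) (d:R).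
Proof. case=> H1 H2; split; first by move: H1 => /derivable1P. by rewrite -deriveLine. Qed.

Lemma isd_comp (g : R -> R) F x v dF dg :
  is_derive x v F dF -> is_derive (F x) 1 g dg -> is_derive x v (fun z => g (F z)) (dg * dF).
Proof.
move=> /line_isd [H1 H2] [G1 G2]; apply: isd_line.
have e0 : F (0 *: v + x) = F x by rewrite scale0r add0r.
rewrite -e0 in G1 G2.
split.
  apply/derivable1_diffP; apply: (@differentiable_comp _ _ _ _ (fun h : R => F (h *: v + x)) g).
    by apply/derivable1_diffP.
  by apply/derivable1_diffP.
have := derive1_comp H1 G1; rewrite !derive1E => ->.
by rewrite H2 G2.
Qed.

Lemma isdM F G x v dF dG : is_derive x v F dF -> is_derive x v G dG ->
  is_derive x v (fun z => F z * G z) (F x * dG + G x * dF).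
Proof. move=> HF HG; exact: (is_deriveM HF HG). Qed.

Lemma isdD F G x v dF dG : is_derive x v F dF -> is_derive x v G dG ->
  is_derive x v (fun z => F z + G z) (dF + dG).
Proof. by move=> HF HG; have := is_deriveD HF HG. Qed.

Lemma isdN F x v dF : is_derive x v F dF -> is_derive x v (fun z => - F z) (- dF).
Proof. by move=> HF; have := is_deriveN HF. Qed.

Lemma isdX F x v dF k : is_derive x v F dF ->
  is_derive x v (fun z => F z ^+ k) (k%:R * F x ^+ k.-1 * dF).
Proof.
move=> HF; have := is_deriveX k HF.
have -> : F ^+ k = (fun z => F z ^+ k) by apply/funext => z; rewrite exprfctE.
by [].
Qed.

Lemma isdC (c : R) x v : is_derive x v (fun _ : V => c) 0.
Proof. exact: is_derive_cst. Qed.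

Lemma isdCM (c : R) F x v dF : is_derive x v F dF -> is_derive x v (fun z => c * F z) (c * dF).
Proof. by move=> HF; have := isdM (isdC c x v) HF; rewrite mulr0 addr0. Qed.

Lemma isd_sum k (h : 'I_k -> V -> R) x v (dh : 'I_k -> R) :
  (forall i, is_derive x v (h i) (dh i)) ->
  is_derive x v (fun z => \sum_(i < k) h i z) (\sum_(i < k) dh i).
Proof.
move=> H; have := is_derive_sum H.
suff -> : (\sum_(i < k) h i) = (fun z => \sum_(i < k) h i z) by [].
by apply/funext => z; rewrite fct_sumE.
Qed.

Lemma isd_val F x v d : is_derive x v F d -> derive F x v = d.
Proof. by case. Qed.

Lemma isd_ext F G x v d : F = G -> is_derive x v F d -> is_derive x v G d.
Proof. by move=> ->. Qed.

End Tool.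

Lemma isd_coord (R : realType) (N : nat) (y v : 'rV[R]_N) l :
  is_derive y v (fun z : 'rV[R]_N => z ord0 l) (v ord0 l).
Proof.
apply: isd_line.
have -> : (fun h : R => (h *: v + y) ord0 l) = (fun h => v ord0 l * h + y ord0 l).
  by apply/funext => h; rewrite !mxE mulrC.
by have := isdD (isdCM (v ord0 l) (@is_derive_id _ R (0:R) (1:R))) (isdC (y ord0 l) (0:R) (1:R)); rewrite mulr1 addr0.
Qed.

Section Q.
Variables (R : realType) (N : nat).
Hypothesis N3 : (3 <= N)%N.

Lemma NN_gt0 : 0 < N%:R :> R.
Proof. by rewrite ltr0n; apply: leq_trans N3. Qed.

Definition qf (y : 'rV[R]_N) : R := enorm y ^+ 2 / (2 * N%:R).

Lemma enorm2 (y : 'rV[R]_N) : enorm y ^+ 2 = \sum_(l < N) y ord0 l ^+ 2.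
Proof. by rewrite /enorm sqr_sqrtr // sumr_ge0 // => l _; rewrite sqr_ge0. Qed.

Lemma qfE : qf = fun y => \sum_(l < N) y ord0 l ^+ 2 / (2 * N%:R).
Proof. by apply/funext => y; rewrite /qf enorm2 mulr_suml. Qed.

Lemma isd_qf (y : 'rV[R]_N) j :
  is_derive y (delta_mx ord0 j) qf (y ord0 j / N%:R).
Proof.
rewrite qfE.
have H : forall l, is_derive y (delta_mx ord0 j)
   (fun z : 'rV[R]_N => (2 * N%:R)^-1 * z ord0 l ^+ 2)
   ((2 * N%:R)^-1 * (2%:R * y ord0 l ^+ 1 * (delta_mx ord0 j : 'rV[R]_N) ord0 l)).
  by move=> l; apply: isdCM; apply: isdX; apply: isd_coord.
have := isd_sum H.
have -> : (fun z : 'rV[R]_N => \sum_(i < N) (2 * N%:R)^-1 * z ord0 i ^+ 2) =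
          (fun z => \sum_(l < N) z ord0 l ^+ 2 / (2 * N%:R)).
  by apply/funext => z; apply: eq_bigr => l _; rewrite mulrC.
rewrite (bigD1 j) //= big1; last first.
  by move=> l /negbTE lj; rewrite mxE lj andbF /= mulr0 mulr0.
rewrite mxE !eqxx /= addr0 expr1 mulr1 => H2.
apply: (is_derive_eq H2).
have Np := NN_gt0; field; lra.
Qed.

Lemma qf_cont (y : 'rV[R]_N) : qf @ y --> qf y.
Proof.
have D : differentiable (\sum_(l < N) ((fun z : 'rV[R]_N => z ord0 l) ^+ 2 * cst ((2 * N%:R)^-1))) y.
  apply: differentiable_sum => l.
  apply: differentiableM; last exact: differentiable_cst.
  apply: differentiableX.
  exact: differentiable_coord.
have := differentiable_continuous D.
have -> : (\sum_(l < N) ((fun z : 'rV[R]_N => z ord0 l) ^+ 2 * cst ((2 * N%:R)^-1))) = qf.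
  rewrite qfE; apply/funext => z; rewrite fct_sumE; apply: eq_bigr => l _.
  by rewrite /= exprfctE.
by [].
Qed.

Lemma qf_near (y : 'rV[R]_N) : 0 < qf y -> \forall y' \near y, 0 < qf y'.
Proof. move=> H; exact: (cvgr_gt _ (@qf_cont y) _ H). Qed.

End Q.

Lemma isdV (R : realType) (V : normedModType R) (F : V -> R) x v dF :
  F x != 0 -> is_derive x v F dF -> is_derive x v (fun z => (F z)^-1) (- (F x)^-2 * dF).
Proof.
move=> H [D1 D2]; split; first exact: derivableV.
by rewrite deriveV // D2.
Qed.

Ltac dt := lazymatch goal with
 | |- is_derive _ _ (fun _ => ?c) _ => apply: isdC
 | |- is_derive _ _ (fun z => _ * _) _ => apply: isdM; dt
 | |- is_derive _ _ (fun z => _ + _) _ => apply: isdD; dt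
 | |- is_derive _ _ (fun z => - _) _ => apply: isdN; dt
 | |- is_derive _ _ (fun z => _ ^+ _) _ => apply: isdX; dt
 | |- is_derive _ _ (fun z => expR _) _ => refine (isd_comp _ (is_derive_expR _)); dt
 | _ => eassumption
 end.

Ltac dE := apply: is_derive_eq; [ dt .. | idtac ].
Ltac fin := rewrite /= -?[_ *: _]/(_ * _).

Section F.
Variables (R : realType) (n : nat) (f : 'rV[R]_n -> R -> R).
Hypothesis sm : smooth_pos f.

Local Notation ei i := (delta_mx ord0 i : 'rV[R]_n).

Lemma isx ds i x (t : R) : 0 < t ->
  is_derive x (ei i) (fun z => pdn ds f z t) (pdx (pdn ds f) i x t).
Proof. by move=> t0; have [H _] := sm ds x t0; exact: derivableP (H (Some i)). Qed.

Lemma ist ds x (t : R) : 0 < t ->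
  is_derive t 1 (fun s => pdn ds f x s) (pdt (pdn ds f) x t).
Proof. by move=> t0; have [H _] := sm ds x t0; exact: derivableP (H None). Qed.

Definition W x s := expR (- f x s).

Lemma W_dx x (t : R) i : 0 < t -> is_derive x (ei i) (fun z => W z t) (- pdx f i x t * W x t).
Proof.
move=> t0; have H := isx [::] i x t0.
by rewrite /W; dE; rewrite /=; ring.
Qed.

Lemma W_dt x (t : R) : 0 < t -> is_derive t 1 (fun s => W x s) (- pdt f x t * W x t).
Proof.
move=> t0; have H := ist [::] x t0.
by rewrite /W; dE; rewrite /=; ring.
Qed.

Lemma W_dx2 x (t : R) i : 0 < t ->
  is_derive x (ei i) (fun z => - pdx f i z t * W z t)
    ((pdx f i x t ^+ 2 - pdx (pdx f i) i x t) * W x t).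
Proof.
move=> t0; have H1 := isx [:: Some i] i x t0; have H2 := W_dx x i t0.
by dE; rewrite /= -?[_ *: _]/(_ * _); ring.
Qed.

Lemma pdxW x (t : R) i : 0 < t -> pdx W i x t = - pdx f i x t * W x t.
Proof. by move=> t0; exact: isd_val (W_dx x i t0). Qed.

Lemma pdtW x (t : R) : 0 < t -> pdt W x t = - pdt f x t * W x t.
Proof. by move=> t0; exact: isd_val (W_dt x t0). Qed.

Lemma pdxxW x (t : R) i : 0 < t ->
  pdx (pdx W i) i x t = (pdx f i x t ^+ 2 - pdx (pdx f i) i x t) * W x t.
Proof.
move=> t0; rewrite {1}/pdx.
have -> : (fun z => pdx W i z t) = (fun z => - pdx f i z t * W z t).
  by apply/funext => z; rewrite pdxW.
exact: isd_val (W_dx2 x i t0).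
Qed.

Let c : R := - (n%:R / 2).

Lemma pdxU x (t : R) i : 0 < t -> pdx (ufun f) i x t = t `^ c * (- pdx f i x t * W x t).
Proof. by move=> t0; exact: isd_val (isdCM (t `^ c) (W_dx x i t0)). Qed.

Lemma pdxxU x (t : R) i : 0 < t ->
  pdx (pdx (ufun f) i) i x t = t `^ c * ((pdx f i x t ^+ 2 - pdx (pdx f i) i x t) * W x t).
Proof.
move=> t0; rewrite {1}/pdx.
have -> : (fun z => pdx (ufun f) i z t) = (fun z => t `^ c * (- pdx f i z t * W z t)).
  by apply/funext => z; rewrite pdxU.
exact: isd_val (isdCM (t `^ c) (W_dx2 x i t0)).
Qed.

Lemma pdtU x (t : R) : 0 < t ->
  pdt (ufun f) x t = t `^ c * (- pdt f x t * W x t) + W x t * (c * t `^ (c - 1)).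
Proof.
move=> t0; have H1 := is_derive1_powR c t0; have H2 := W_dt x t0.
exact: isd_val (isdM H1 H2).
Qed.

Hypothesis he : heat_eq f.

Lemma heatW x (t : R) : 0 < t ->
  \sum_(i < n) pdx (pdx W i) i x t = (c / t - pdt f x t) * W x t.
Proof.
move=> t0; have := he x t0; rewrite pdtU //.
under eq_bigr do rewrite pdxxU //.
rewrite -mulr_sumr.
under [X in _ -> X = _]eq_bigr do rewrite pdxxW //.
set S := \sum_(i < n) _.
have tc : 0 < t `^ c by apply: powR_gt0.
rewrite powRB; last by rewrite (gt_eqF t0) /= implybT.
rewrite powRr1; last exact: ltW.
move=> E; apply: (mulfI (negbT (gt_eqF tc))); rewrite -E.
field; exact: (negbT (gt_eqF t0)).
Qed.

End F.

Section N.
Variables (R : realType) (n : nat) (f : 'rV[R]_n -> R -> R).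
Hypothesis sm : smooth_pos f.
Hypothesis he : heat_eq f.
Variable N : nat.
Hypothesis N3 : (3 <= N)%N.
Hypothesis n1 : (1 <= n)%N.

Local Notation ei i := (delta_mx ord0 i : 'rV[R]_n).
Local Notation ej j := (delta_mx ord0 j : 'rV[R]_N).

Definition kk : R := (n + N - 2)%N%:R.
Let NN : R := N%:R.

Lemma kkE : kk = n%:R + NN - 2.
Proof. rewrite /kk natrB ?natrD //; apply: (leq_trans _ (leq_addl n N)); exact: leq_trans N3. Qed.

Lemma NN_gt0' : 0 < NN.
Proof. exact: NN_gt0. Qed.

Lemma kk_ge : NN - 1 <= kk.
Proof. rewrite kkE; have : 1 <= n%:R :> R by rewrite ler1n. lra. Qed.

Lemma NN_ge3 : 3 <= NN.
Proof. by rewrite /NN ler_nat. Qed.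

Lemma kk_gt0 : 0 < kk.
Proof. have := kk_ge; have := NN_ge3; lra. Qed.

Let a : R := - (kk / 2).

Definition Gp (b s : R) := (2 * NN * s) `^ b.

Lemma Gp_d (b s : R) : 0 < s -> is_derive s 1 (Gp b) (b / s * Gp b s).
Proof.
move=> s0; have Np := NN_gt0'.
have H1 : is_derive s 1 (fun s => 2 * NN * s) (2 * NN * 1).
  exact: (isdCM (2 * NN) (@is_derive_id _ R s 1)).
have p0 : 0 < 2 * NN * s by rewrite !mulr_gt0.
have H2 := is_derive1_powR b p0.
apply: (is_derive_eq (isd_comp H1 H2)).
rewrite /Gp powRB; last by rewrite (gt_eqF p0) /= implybT.
rewrite powRr1; last exact: ltW.
field; apply/andP; split; [exact: lt0r_neq0|exact: lt0r_neq0].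
Qed.

Definition V x s := Gp a s * W f x s.

Lemma vfunE : @vfun R n N f = fun x y => V x (qf y).
Proof.
apply/funext => x; apply/funext => y.
rewrite /vfun /V /Gp /W /qf; congr (_ * _).
have -> : 2 * NN * (enorm y ^+ 2 / (2 * N%:R)) = enorm y ^+ 2.
  by rewrite /NN; field; have := NN_gt0'; rewrite /NN => ?; exact: lt0r_neq0.
have e0 : 0 <= enorm y by rewrite /enorm sqrtr_ge0.
rewrite -(powR_mulrn 2 e0) -powRrM /a.
have -> : 2%:R * - (kk / 2) = - kk by field.
by rewrite /kk powR_invn.
Qed.

Definition B x s := Gp (2^-1) s * expR (f x s / kk).

Lemma mkk : (2 - (n + N)%:R)^-1 = - kk^-1 :> R.
Proof. by rewrite kkE natrD -invrN; congr (_^-1); rewrite /NN; ring. Qed.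

Lemma bfunE : @bfun R n N f = fun x y => B x (qf y).
Proof.
apply/funext => x; apply/funext => y.
rewrite /bfun vfunE /V /B mkk powRM ?powR_ge0 ?expR_ge0 //.
rewrite /Gp -powRrM /W -expRM; congr (_ `^ _ * expR _).
  rewrite /a; field; exact: lt0r_neq0 kk_gt0.
by field; exact: lt0r_neq0 kk_gt0.
Qed.

Definition V1 x s := Gp a s * W f x s * (a / s - pdt f x s).
Definition V2 x s := Gp a s * W f x s * ((a / s - pdt f x s) ^+ 2 - a / s ^+ 2 - pdt (pdt f) x s).

Lemma V_dt x (s : R) : 0 < s -> is_derive s 1 (fun s => Gp a s * W f x s) (V1 x s).
Proof.
move=> s0; have H1 := Gp_d a s0; have H2 := W_dt sm x s0.
by dE; rewrite /V1; fin; ring.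
Qed.

Lemma V1_dt x (s : R) : 0 < s -> is_derive s 1 (fun s => V1 x s) (V2 x s).
Proof.
move=> s0; have H1 := Gp_d a s0; have H2 := W_dt sm x s0.
have H3 : is_derive s 1 (fun s => s^-1) (- s^-2 * 1).
  exact: (isdV (lt0r_neq0 s0) (@is_derive_id _ R s 1)).
have H4 := ist sm [:: None] x s0.
rewrite /V1; dE; rewrite /V2; fin.
field; exact: lt0r_neq0.
Qed.

Lemma dY1 x (y : 'rV[R]_N) j : 0 < qf y ->
  dY (fun x y => V x (qf y)) j x y = V1 x (qf y) * (y ord0 j / NN).
Proof.
move=> q0; rewrite /dY.
exact: isd_val (isd_comp (isd_qf N3 y j) (V_dt x q0)).
Qed.

Lemma dYY x (y : 'rV[R]_N) j : 0 < qf y ->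
  dY (dY (fun x y => V x (qf y)) j) j x y =
  V1 x (qf y) / NN + (y ord0 j / NN) ^+ 2 * V2 x (qf y).
Proof.
move=> q0; rewrite {1}/dY.
rewrite (@near_eq_derive _ _ _ _ (fun y' => V1 x (qf y') * (y' ord0 j * NN^-1))); last first.
  by apply: filterS (qf_near q0) => y' /= q1; rewrite dY1.
have H1 := isd_comp (isd_qf N3 y j) (V1_dt x q0).
have H2 := isd_coord y (ej j) j.
have H3 : is_derive y (ej j) (fun y' : 'rV[R]_N => y' ord0 j * NN^-1) ((ej j) ord0 j * NN^-1).
  by have := isdM H2 (isdC NN^-1 y (ej j)); rewrite mulr0 add0r mulrC.
rewrite (isd_val (isdM H1 H3)) mxE !eqxx /= .
have := NN_gt0'; move=> Np; field; exact: lt0r_neq0.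
Qed.

Definition L x s := (- (n%:R / 2) / s - pdt f x s) + (a / s - pdt f x s) +
  2 * s / NN * ((a / s - pdt f x s) ^+ 2 - a / s ^+ 2 - pdt (pdt f) x s).

Lemma pdxxV x s i : 0 < s ->
  pdx (pdx V i) i x s = Gp a s * pdx (pdx (W f) i) i x s.
Proof.
move=> s0; rewrite {1}/pdx.
have -> : (fun z => pdx V i z s) = (fun z => Gp a s * (- pdx f i z s * W f z s)).
  apply/funext => z; rewrite /pdx /V.
  exact: isd_val (isdCM (Gp a s) (W_dx sm z i s0)).
rewrite (isd_val (isdCM (Gp a s) (W_dx2 sm x i s0))).
by rewrite pdxxW.
Qed.

Lemma lapV x (y : 'rV[R]_N) : 0 < qf y ->
  lap (@vfun R n N f) x y = Gp a (qf y) * W f x (qf y) * L x (qf y).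
Proof.
move=> q0; rewrite vfunE /lap.
have E1 : forall i, dX (dX (fun x y => V x (qf y)) i) i x y = Gp a (qf y) * pdx (pdx (W f) i) i x (qf y).
  by move=> i; rewrite -pdxxV.
under eq_bigr do rewrite E1.
under [X in _ + X]eq_bigr do rewrite dYY //.
rewrite -mulr_sumr heatW //.
have Np := NN_gt0'.
have Ey : \sum_(j < N) y ord0 j ^+ 2 = 2 * NN * qf y.
  by rewrite -enorm2 /qf /NN; field; rewrite -/NN; exact: lt0r_neq0.
have -> : \sum_(j < N) (V1 x (qf y) / NN + (y ord0 j / NN) ^+ 2 * V2 x (qf y)) =
   NN * (V1 x (qf y) / NN) + (\sum_(j < N) y ord0 j ^+ 2) * (V2 x (qf y) / NN ^+ 2).
  rewrite big_split /= sumr_const card_ord mulr_suml; congr (_ + _).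
    by rewrite mulr_natl.
  by apply: eq_bigr => j _; field; exact: lt0r_neq0.
rewrite Ey /V1 /V2 /L.
field; apply/andP; split; exact: lt0r_neq0.
Qed.

Definition Pf x s := 4 * (n%:R - 2) * (s * pdt f x s) +
  4 * (s ^+ 2 * (pdt f x s ^+ 2 - pdt (pdt f) x s)) + n%:R * (n%:R - 2).
Definition Psi x s := expR (2 * f x s / kk) * Pf x s.

Lemma psiE x (y : 'rV[R]_N) : 0 < qf y -> psifun f x y = Psi x (qf y).
Proof.
move=> q0; rewrite /psifun lapV // bfunE /B.
set s := qf y.
have Np := NN_gt0'.
have kp := kk_gt0.
have sp : 0 < 2 * NN * s by apply: mulr_gt0 => //; apply: mulr_gt0.
rewrite exprMn.
have G1 : Gp (2^-1) s ^+ (n + N) * Gp a s = 2 * NN * s.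
  rewrite /Gp -powR_mulrn ?powR_ge0 // -powRrM -powRD; last first.
    by rewrite (gt_eqF sp) implybT.
  rewrite (_ : _ + a = 1); last by rewrite /a kkE natrD /NN; field.
  by rewrite powRr1 //; exact: ltW.
have E1 : expR (f x s / kk) ^+ (n + N) * W f x s = expR (2 * f x s / kk).
  rewrite -expRM_natr /W -expRD; congr expR.
  rewrite kkE natrD; field; rewrite -/NN -kkE; exact: lt0r_neq0.
transitivity ((Gp (2^-1) s ^+ (n + N) * Gp a s) * (expR (f x s / kk) ^+ (n + N) * W f x s) * L x s).
  by ring.
rewrite G1 E1 /Psi /Pf /L /a.
have s0 : s != 0 by rewrite /s; exact: lt0r_neq0.
have k0 : kk != 0 by exact: lt0r_neq0.
have N0 : NN != 0 by exact: lt0r_neq0.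
rewrite kkE; field; apply/andP; split => //.
Qed.

Definition DPx x s i :=
  expR (2 * f x s / kk) * (2 * pdx f i x s / kk) * Pf x s +
  expR (2 * f x s / kk) * (4 * (n%:R - 2) * (s * pdx (pdt f) i x s) +
    4 * (s ^+ 2 * (2 * pdt f x s * pdx (pdt f) i x s - pdx (pdt (pdt f)) i x s))).

Definition DPt x s :=
  expR (2 * f x s / kk) * (2 * pdt f x s / kk) * Pf x s +
  expR (2 * f x s / kk) * (4 * (n%:R - 2) * (pdt f x s + s * pdt (pdt f) x s) +
    4 * (2 * s * (pdt f x s ^+ 2 - pdt (pdt f) x s) +
         s ^+ 2 * (2 * pdt f x s * pdt (pdt f) x s - pdt (pdt (pdt f)) x s))).

Lemma Psi_dx x (s : R) i : 0 < s -> is_derive x (ei i) (fun z => Psi z s) (DPx x s i).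
Proof.
move=> s0; have H0 := isx sm [::] i x s0; have H1 := isx sm [:: None] i x s0.
have H2 := isx sm [:: None; None] i x s0.
rewrite /Psi /Pf; dE; rewrite /DPx /Pf; fin; ring.
Qed.

Lemma Psi_dt x (s : R) : 0 < s -> is_derive s 1 (fun s => Psi x s) (DPt x s).
Proof.
move=> s0; have H0 := ist sm [::] x s0; have H1 := ist sm [:: None] x s0.
have H2 := ist sm [:: None; None] x s0; have H3 := @is_derive_id _ R s 1.
rewrite /Psi /Pf; dE; rewrite /DPt /Pf; fin; ring.
Qed.

Lemma dXpsi x (y : 'rV[R]_N) i : 0 < qf y -> dX (psifun f) i x y = DPx x (qf y) i.
Proof.
move=> q0; rewrite /dX.
have -> : (fun x' => psifun f x' y) = (fun x' => Psi x' (qf y)).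
  by apply/funext => x'; rewrite psiE.
exact: isd_val (Psi_dx x i q0).
Qed.

Lemma dYpsi x (y : 'rV[R]_N) j : 0 < qf y ->
  dY (psifun f) j x y = DPt x (qf y) * (y ord0 j / NN).
Proof.
move=> q0; rewrite /dY.
rewrite (@near_eq_derive _ _ _ _ (fun y' => Psi x (qf y'))); last first.
  by apply: filterS (qf_near q0) => y' /= q1; rewrite psiE.
exact: isd_val (isd_comp (isd_qf N3 y j) (Psi_dt x q0)).
Qed.

Definition DBt x s := Gp (2^-1) s * expR (f x s / kk) * (2^-1 / s + pdt f x s / kk).

Lemma B_dx x (s : R) i : 0 < s -> is_derive x (ei i) (fun z => B z s)
  (Gp (2^-1) s * (expR (f x s / kk) * (pdx f i x s / kk))).
Proof.
move=> s0; have H0 := isx sm [::] i x s0.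
by rewrite /B; dE; fin; ring.
Qed.

Lemma B_dt x (s : R) : 0 < s -> is_derive s 1 (fun s => B x s) (DBt x s).
Proof.
move=> s0; have H0 := ist sm [::] x s0; have H1 := Gp_d (2^-1) s0.
by rewrite /B; dE; rewrite /DBt; fin; ring.
Qed.

Lemma dXb x (y : 'rV[R]_N) i : 0 < qf y ->
  dX (bfun f) i x y = Gp (2^-1) (qf y) * (expR (f x (qf y) / kk) * (pdx f i x (qf y) / kk)).
Proof. by move=> q0; rewrite bfunE; exact: isd_val (B_dx x i q0). Qed.

Lemma dYb x (y : 'rV[R]_N) j : 0 < qf y ->
  dY (bfun f) j x y = DBt x (qf y) * (y ord0 j / NN).
Proof.
move=> q0; rewrite bfunE /dY.
exact: isd_val (isd_comp (isd_qf N3 y j) (B_dt x q0)).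
Qed.

Lemma Gp2 (s : R) : 0 < s -> Gp (2^-1) s ^+ 2 = 2 * NN * s.
Proof.
move=> s0; have Np := NN_gt0'.
have sp : 0 < 2 * NN * s by apply: mulr_gt0 => //; apply: mulr_gt0.
rewrite /Gp -powR_mulrn ?powR_ge0 // -powRrM mulVf // powRr1 //; exact: ltW.
Qed.

Lemma sumY (c : R) (y : 'rV[R]_N) :
  \sum_(j < N) (c * (y ord0 j / NN)) ^+ 2 = c ^+ 2 * (2 * qf y) / NN.
Proof.
have Np := NN_gt0'; have N0 : NN != 0 by exact: lt0r_neq0.
have Ey : \sum_(j < N) y ord0 j ^+ 2 = 2 * NN * qf y.
  by rewrite -enorm2 /qf /NN; field; rewrite -/NN.
rewrite (eq_bigr (fun j => c ^+ 2 / NN ^+ 2 * y ord0 j ^+ 2)); last first.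
  by move=> j _; field.
by rewrite -mulr_sumr Ey; field.
Qed.

Lemma gXpsi x (y : 'rV[R]_N) : 0 < qf y ->
  gradX_norm (psifun f) x y = Num.sqrt (\sum_(i < n) DPx x (qf y) i ^+ 2).
Proof. by move=> q0; rewrite /gradX_norm; under eq_bigr do rewrite dXpsi //. Qed.

Lemma gYpsi x (y : 'rV[R]_N) : 0 < qf y ->
  gradY_norm (psifun f) x y = Num.sqrt (DPt x (qf y) ^+ 2 * (2 * qf y) / NN).
Proof. by move=> q0; rewrite /gradY_norm; under eq_bigr do rewrite dYpsi //; rewrite sumY. Qed.

Lemma gYb x (y : 'rV[R]_N) : 0 < qf y ->
  gradY_norm (bfun f) x y =
  Num.sqrt ((expR (f x (qf y) / kk) * (1 + 2 * qf y * pdt f x (qf y) / kk)) ^+ 2).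
Proof.
move=> q0; rewrite /gradY_norm; under eq_bigr do rewrite dYb //; rewrite sumY.
congr Num.sqrt; rewrite /DBt exprMn exprMn Gp2 //.
have Np := NN_gt0'; have N0 : NN != 0 by exact: lt0r_neq0.
have k0 : kk != 0 by exact: lt0r_neq0 kk_gt0.
have s0 : qf y != 0 by exact: lt0r_neq0.
by field; apply/and3P; split.
Qed.

Lemma gXb x (y : 'rV[R]_N) : 0 < qf y ->
  gradX_norm (bfun f) x y =
  Num.sqrt ((\sum_(i < n) (expR (f x (qf y) / kk) * pdx f i x (qf y)) ^+ 2) *
            (2 * qf y * (NN / kk) ^+ 2) / NN).
Proof.
move=> q0; rewrite /gradX_norm; under eq_bigr do rewrite dXb //.
congr Num.sqrt.
have Np := NN_gt0'; have N0 : NN != 0 by exact: lt0r_neq0.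
have k0 : kk != 0 by exact: lt0r_neq0 kk_gt0.
rewrite mulr_suml mulr_suml; apply: eq_bigr => i _.
rewrite exprMn Gp2 //; field; exact/andP.
Qed.

End N.

Section UB.
Variables (R : realType) (n : nat) (f : 'rV[R]_n -> R -> R) (tau1 tau2 : R).
Hypothesis t1 : 0 < tau1.
Hypothesis bd : bounded_derivs f tau1 tau2.
Hypothesis n1 : (1 <= n)%N.

Definition UB (g : nat -> 'rV[R]_n -> R -> R) := exists C : R,
  forall N x s, (3 <= N)%N -> tau1 <= s <= tau2 -> `|g N x s| <= C.

Lemma UBc c : UB (fun _ _ _ => c).
Proof. by exists `|c|. Qed.

Lemma UBs : UB (fun _ _ s => s).
Proof. exists tau2 => N x s _ /andP[h1 h2]; rewrite ger0_norm //; exact: le_trans (ltW t1) h1. Qed.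

Lemma UBD g h : UB g -> UB h -> UB (fun N x s => g N x s + h N x s).
Proof.
move=> [C1 H1] [C2 H2]; exists (C1 + C2) => N x s HN Hs.
apply: le_trans (ler_normD _ _) _; apply: lerD; [exact: H1|exact: H2].
Qed.

Lemma UBN g : UB g -> UB (fun N x s => - g N x s).
Proof. by move=> [C H]; exists C => N x s HN Hs; rewrite normrN; apply: H. Qed.

Lemma UBM g h : UB g -> UB h -> UB (fun N x s => g N x s * h N x s).
Proof.
move=> [C1 H1] [C2 H2]; exists (C1 * C2) => N x s HN Hs.
rewrite normrM; apply: ler_pM => //; [exact: H1|exact: H2].
Qed.

Lemma UBX g k : UB g -> UB (fun N x s => g N x s ^+ k).
Proof.
move=> Hg; elim: k => [|k IH]; first exact: (UBc 1).
have -> : (fun N x s => g N x s ^+ k.+1) = (fun N x s => g N x s * g N x s ^+ k).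
  by apply/funext => N; apply/funext => x; apply/funext => s; rewrite exprS.
exact: UBM.
Qed.

Lemma UBexp g : UB g -> UB (fun N x s => expR (g N x s)).
Proof.
move=> [C H]; exists (expR C) => N x s HN Hs.
rewrite ger0_norm ?expR_ge0 // ler_expR.
exact: le_trans (ler_norm _) (H N x s HN Hs).
Qed.

Lemma UBpdn ds : UB (fun _ x s => pdn ds f x s).
Proof. by have [K HK] := bd ds; exists K => N x s _ Hs; apply: HK. Qed.

Lemma UBinvk : UB (fun N _ _ => (kk R n N)^-1).
Proof.
exists 1 => N x s HN _.
have k2 : 1 <= kk R n N.
  by have := kk_ge R HN n1; have := NN_ge3 R HN; lra.
have kp : 0 < kk R n N by lra.
rewrite ger0_norm; last by rewrite invr_ge0; exact: ltW.
by rewrite invf_le1.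
Qed.

Lemma UBNk : UB (fun N _ _ => N%:R / kk R n N).
Proof.
exists 2 => N x s HN _.
have k2 := kk_ge R HN n1; have N3 := NN_ge3 R HN.
have kp : 0 < kk R n N by lra.
rewrite ger0_norm; last by apply: divr_ge0; lra.
rewrite ler_pdivrMr //; lra.
Qed.

Lemma UBsum (g : 'I_n -> nat -> 'rV[R]_n -> R -> R) :
  (forall i, UB (g i)) -> UB (fun N x s => \sum_(i < n) g i N x s).
Proof.
move=> H; have [Cf HC] := boolp.choice H.
exists (\sum_(i < n) Cf i) => N x s HN Hs.
apply: le_trans (ler_norm_sum _ _ _) _; apply: ler_sum => i _; exact: HC.
Qed.

End UB.

Lemma sq1 (R : realType) (A C D : R) : 0 <= A -> `|A| <= C -> 1 + C <= D -> Num.sqrt A <= D.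
Proof.
move=> A0 AC CD.
have h1 : Num.sqrt A <= 1 + A.
  have -> : 1 + A = Num.sqrt ((1 + A) ^+ 2) by rewrite sqrtr_sqr ger0_norm //; lra.
  apply: ler_wsqrtr; nra.
have h2 : A <= C by apply: le_trans AC; rewrite ler_norm.
lra.
Qed.

Lemma sqN (R : realType) (A C D M : R) : 0 <= A -> `|A| <= C -> 1 + C <= D -> 0 < M ->
  Num.sqrt (A / M) <= D / Num.sqrt M.
Proof.
move=> A0 AC CD M0.
rewrite sqrtrM // sqrtrV; last exact: ltW.
apply: ler_wpM2r; first by rewrite invr_ge0 sqrtr_ge0.
exact: sq1 AC CD.
Qed.

Ltac ub bd t1 n1 := lazymatch goal with
 | |- UB _ _ (fun _ _ s => s) => exact: (UBs _ _ t1)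
 | |- UB _ _ (fun N _ _ => N%:R / kk _ _ N) => exact: (UBNk _ _ n1)
 | |- UB _ _ (fun N _ _ => (kk _ _ N)^-1) => exact: (UBinvk _ _ n1)
 | |- UB _ _ (fun _ _ _ => ?c) => apply: UBc
 | |- UB _ _ (fun _ x s => pdt (pdt (pdt _)) x s) => exact: (UBpdn bd [:: None; None; None])
 | |- UB _ _ (fun _ x s => pdt (pdt _) x s) => exact: (UBpdn bd [:: None; None])
 | |- UB _ _ (fun _ x s => pdt _ x s) => exact: (UBpdn bd [:: None])
 | |- UB _ _ (fun _ x s => pdx (pdt (pdt _)) ?i x s) => exact: (UBpdn bd [:: Some i; None; None])
 | |- UB _ _ (fun _ x s => pdx (pdt _) ?i x s) => exact: (UBpdn bd [:: Some i; None])
 | |- UB _ _ (fun _ x s => pdx _ ?i x s) => exact: (UBpdn bd [:: Some i])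
 | |- UB _ _ (fun _ _ _ => _ * _) => apply: UBM; ub bd t1 n1
 | |- UB _ _ (fun _ _ _ => _ + _) => apply: UBD; ub bd t1 n1
 | |- UB _ _ (fun _ _ _ => - _) => apply: UBN; ub bd t1 n1
 | |- UB _ _ (fun _ _ _ => _ ^+ _) => apply: UBX; ub bd t1 n1
 | |- UB _ _ (fun _ _ _ => expR _) => apply: UBexp; ub bd t1 n1
 | |- UB _ _ (fun _ _ _ => \sum_(i < _) _) => apply: UBsum => ?; ub bd t1 n1
 | _ => exact: (UBpdn bd [::])
 end.

Theorem lemma2p5 (R : realType) (n : nat) (f : 'rV[R]_n -> R -> R) (tau1 tau2 : R) :
  (1 <= n)%N ->
  smooth_pos f -> heat_eq f ->
  0 < tau1 -> tau1 < tau2 ->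
  bounded_derivs f tau1 tau2 ->
  exists C : R, forall (N : nat), (3 <= N)%N ->
    forall (x : 'rV[R]_n) (y : 'rV[R]_N),
      tau1 <= enorm y ^+ 2 / (2 * N%:R) <= tau2 ->
      [/\ `|@psifun R n N f x y| <= C,
          gradX_norm (@psifun R n N f) x y <= C,
          gradY_norm (@bfun R n N f) x y <= C,
          gradY_norm (@psifun R n N f) x y <= C / Num.sqrt N%:R &
          gradX_norm (@bfun R n N f) x y <= C / Num.sqrt N%:R].
Proof.
move=> n1 sm he t1 t12 bd.
have [C1 H1] : UB tau1 tau2 (fun N x s => Psi f N x s).
  by rewrite /Psi /Pf; ub bd t1 n1.
have [C2 H2] : UB tau1 tau2 (fun N x s => \sum_(i < n) DPx f N x s i ^+ 2).
  by rewrite /DPx /Pf; ub bd t1 n1.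
have [C3 H3] : UB tau1 tau2 (fun N x s =>
    (expR (f x s / kk R n N) * (1 + 2 * s * pdt f x s / kk R n N)) ^+ 2).
  by ub bd t1 n1.
have [C4 H4] : UB tau1 tau2 (fun N x s => DPt f N x s ^+ 2 * (2 * s)).
  by rewrite /DPt /Pf; ub bd t1 n1.
have [C5 H5] : UB tau1 tau2 (fun N x s =>
    (\sum_(i < n) (expR (f x s / kk R n N) * pdx f i x s) ^+ 2) *
    (2 * s * (N%:R / kk R n N) ^+ 2)).
  by ub bd t1 n1.
set C := 1 + `|C1| + `|C2| + `|C3| + `|C4| + `|C5|.
have a1 := ler_norm C1; have a2 := ler_norm C2; have a3 := ler_norm C3.
have a4 := ler_norm C4; have a5 := ler_norm C5.
have b1 := normr_ge0 C1; have b2 := normr_ge0 C2; have b3 := normr_ge0 C3.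
have b4 := normr_ge0 C4; have b5 := normr_ge0 C5.
exists C => N N3 x y hs.
have q0 : 0 < qf y.
  by move: hs => /andP[h1 _]; exact: lt_le_trans t1 h1.
have Np : 0 < N%:R :> R by exact: NN_gt0 N3.
have s0 : 0 <= qf y by exact: ltW.
split.
- rewrite (psiE sm he N3 n1 x q0).
  have := H1 N x (qf y) N3 hs; rewrite /C; lra.
- rewrite (gXpsi sm he N3 n1 x q0).
  apply: sq1 (H2 N x (qf y) N3 hs) _; last by rewrite /C; lra.
  by apply: sumr_ge0 => i _; exact: sqr_ge0.
- rewrite (gYb sm N3 n1 x q0).
  apply: sq1 (H3 N x (qf y) N3 hs) _; last by rewrite /C; lra.
  exact: sqr_ge0.
- rewrite (gYpsi sm he N3 n1 x q0).
  apply: sqN (H4 N x (qf y) N3 hs) _ _; [|by rewrite /C; lra|exact: Np].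
  by apply: mulr_ge0; [exact: sqr_ge0 | apply: mulr_ge0].
- rewrite (gXb sm N3 n1 x q0).
  apply: sqN (H5 N x (qf y) N3 hs) _ _; [|by rewrite /C; lra|exact: Np].
  apply: mulr_ge0; first by apply: sumr_ge0 => i _; exact: sqr_ge0.
  by apply: mulr_ge0; [apply: mulr_ge0 | exact: sqr_ge0].
Qed.
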